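(* Let $\mu$ be a bounded signed Borel measure on a Hausdorff space ${\mathscr X}$ and let ${\mathscr A}$ be a set of finite Borel partitions of ${\mathscr X}$, directed under refinement. Then $\alpha\mapsto\|\mu_\alpha\|_{1,\alpha}=\sum_{A\in\alpha}|\mu(A)|$ is monotone increasing on ${\mathscr A}$ (i.e. $\alpha\le\beta$ implies $\|\mu_\alpha\|_{1,\alpha}\le\|\mu_\beta\|_{1,\beta}$). If moreover ${\mathscr A}$ resolves ${\mathscr X}$, then $$\|\mu\|_{1}=|\mu|({\mathscr X})=\sup_{\alpha\in{\mathscr A}}\sum_{A\in\alpha}|\mu(A)|.$$
   Context: A (finite Borel) partition $\alpha$ of ${\mathscr X}$ is a finite collection of non-empty, pairwise disjoint Borel sets with union ${\mathscr X}$. $\alpha\le\beta$ means $\beta$ refines $\alpha$. ${\mathscr A}$ resolves ${\mathscr X}$ if the $\sigma$-algebra generated by all sets occurring in partitions of ${\mathscr A}$ is the Borel $\sigma$-algebra. For a signed measure $\mu$, $\mu_\alpha=(\mu(A))_{A\in\alpha}$ is its $\alpha$-histogram. *)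

(* Defs.v *)
From HB Require Import structures.
From mathcomp Require Import all_boot all_order all_algebra.
From mathcomp Require Import all_classical all_reals all_analysis.
Set Implicit Arguments. Unset Strict Implicit. Unset Printing Implicit Defensive.
Import Order.TTheory GRing.Theory Num.Theory.
Local Open Scope classical_set_scope.
Local Open Scope ring_scope.

Notation borel X := (g_sigma_algebraType (@open X)).

Section partitions.
Context d (T : measurableType d).

Definition fin_partition (a : set (set T)) : Prop :=
  [/\ finite_set a,
      (forall A, a A -> measurable A /\ A !=set0),
      (forall A B, a A -> a B -> A <> B -> A `&` B = set0) &
      \bigcup_(A in a) A = setT].

(* refines a b : b refines a  (written a <= b in the paper) *)
Definition refines (a b : set (set T)) : Prop :=
  forall B, b B -> exists A, a A /\ B `<=` A.

Definition directed_refinement (AA : set (set (set T))) : Prop :=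
  AA !=set0 /\
  forall a b, AA a -> AA b -> exists c, [/\ AA c, refines a c & refines b c].

Definition resolves (AA : set (set (set T))) : Prop :=
  <<s \bigcup_(a in AA) a >> = measurable.

Definition hist_norm1 (R : realType) (mu : set T -> \bar R) (a : set (set T))
  : \bar R := (\sum_(A \in a) `|mu A|)%E.

End partitions.

(* Main.v *)
Require Import Defs.
From HB Require Import structures.
From mathcomp Require Import all_boot all_order all_algebra.
From mathcomp Require Import all_classical all_reals all_analysis.
From mathcomp Require Import lra.
Import Order.TTheory GRing.Theory Num.Theory.
Local Open Scope classical_set_scope.
Local Open Scope ring_scope.
Set Implicit Arguments. Unset Strict Implicit. Unset Printing Implicit Defensive.

Section addfin.
Context d (T : measurableType d) (R : realType) (mu : set T -> \bar R).
Hypothesis musa : measure_function.semi_additive mu.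
Local Open Scope ereal_scope.

Let sa_ord n (F : 'I_n -> set T) :
  (forall (k : 'I_n), measurable (F k)) ->
  trivIset setT F ->
  measurable (\big[setU/set0]_(k < n) F k) ->
  mu (\big[setU/set0]_(i < n) F i) = \sum_(i < n) mu (F i).
Proof.
move=> mF tF mUF; pose F' (i : nat) := oapp F set0 (insub i).
have FE (i : 'I_n) : F i = (F' \o val) i by rewrite /F'/= valK/=.
rewrite (eq_bigr (F' \o val))// (eq_bigr (mu \o F' \o val))//; last first.
  by move=> i _; rewrite FE.
rewrite -musa//.
- by move=> k; rewrite /F'; case: insubP => /=.
- apply/trivIsetP=> i j _ _; rewrite /F'.
  do 2?[case: insubP; rewrite ?(set0I, setI0)//= => ? _ <-].
  by move/trivIsetP: tF; apply.
- by rewrite (eq_bigr (F' \o val)) in mUF.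
Qed.

Let sa_ord_I (F : nat -> set T) (n : nat) :
  (forall k, (k < n)%N -> measurable (F k)) ->
  trivIset `I_n F ->
  measurable (\big[setU/set0]_(k < n) F k) ->
  mu (\big[setU/set0]_(i < n) F i) = \sum_(i < n) mu (F i).
Proof.
move=> mF tF; apply: sa_ord.
  by move=> k; apply: mF.
by rewrite trivIset_comp// ?(image_eq [surjfun of val])//; apply: 'inj_val.
Qed.

Lemma sa_fin_bigcup (I : choiceType) (D : set I) (F : I -> set T) :
    finite_set D ->
    trivIset D F ->
    (forall i, D i -> measurable (F i)) ->
  mu (\bigcup_(i in D) F i) = \sum_(i \in D) mu (F i).
Proof.
move=> Dfin Ftriv Fm.
have UFm : measurable (\bigcup_(i in D) F i) by exact: fin_bigcup_measurable.
move: Dfin Ftriv Fm UFm.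
elim/choicePpointed: I => I in D F *.
  rewrite !emptyE => *; rewrite fsbig_set0 bigcup0 //.
  have /[!big_ord0] -> //:= @musa (fun=> set0) 0%N.
  exact: trivIset_set0.
move=> [n /ppcard_eqP[f]] Ftriv Fm UFm.
rewrite -(image_eq [surjfun of f^-1%FUN])/= in UFm Ftriv *.
rewrite bigcup_image fsbig_image//= bigcup_mkord -fsbig_ord/= in UFm *.
rewrite (@sa_ord_I (F \o f^-1))//= 1?trivIset_comp//.
by move=> k kn; apply: Fm; exact: funS.
Qed.
End addfin.

Section part1.
Context d (T : measurableType d) (R : realType) (mu : {charge set T -> \bar R}).
Local Open Scope ereal_scope.

Lemma part_triv (a : set (set T)) F : fin_partition a ->
  trivIset a (fun A => A `&` F).
Proof.
case=> _ _ disj _; apply/trivIsetP => A B aA aB /eqP AB.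
by rewrite setIACA setIid (disj A B aA aB AB) set0I.
Qed.

Lemma part_sum (nu : set T -> \bar R) (H : measure_function.semi_additive nu)
  a F : fin_partition a -> measurable F ->
  nu F = \sum_(A \in a) nu (A `&` F).
Proof.
move=> pa mF; have [fa ma _ cov] := pa.
rewrite -sa_fin_bigcup//.
- by congr nu; rewrite -setI_bigcupl cov setTI.
- exact: part_triv.
- by move=> A /ma[mA _]; exact: measurableI.
Qed.

Lemma hist_mono a b : fin_partition a -> fin_partition b -> refines a b ->
  hist_norm1 mu a <= hist_norm1 mu b.
Proof.
move=> pa pb ab; have [fa ma da ca] := pa; have [fb mb db cb] := pb.
rewrite /hist_norm1.
apply: (@le_trans _ _ (\sum_(A \in a) \sum_(B \in b) `|mu (B `&` A)|)).
  apply: lee_fsum => // A aA.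
  have := @charge_semi_additive _ _ _ mu => hsa.
  rewrite (part_sum hsa pb (proj1 (ma A aA))).
  rewrite !fsbig_finite //; exact: lee_abs_sum.
rewrite exchange_fsbig //; apply: lee_fsum => // B bB.
have [A0 [aA0 BA0]] := ab B bB.
rewrite (fsbigD1 A0) // fsbig1 ?adde0.
  by rewrite setIidl //= adde0.
move=> A [aA nA].
have h := da A0 A aA0 aA (fun e => nA (esym e)).
suff -> : B `&` A = set0 by rewrite charge0 abse0.
apply/seteqP; split=> // x [Bx Ax].
have : (A0 `&` A) x := conj (BA0 _ Bx) Ax.
by rewrite h.
Qed.
End part1.

Section part2.
Context d (T : measurableType d) (R : realType) (mu : {charge set T -> \bar R}).
Variables (P N : set T) (muPN : hahn_decomposition mu P N).
Variable AA : set (set (set T)).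
Hypothesis AApart : forall a, AA a -> fin_partition a.
Hypothesis AAdir : directed_refinement AA.
Local Open Scope ereal_scope.

Local Notation var := (charge_variation muPN).
Local Notation jp := (jordan_pos muPN).
Local Notation jn := (jordan_neg muPN).

Definition sat (c : set (set T)) E := forall C, c C -> C `<=` E \/ C `<=` ~` E.
Definition alg E := measurable E /\ exists c, AA c /\ sat c E.
Definition sd (A E : set T) := (A `\` E) `|` (E `\` A).
Definition approx A := measurable A /\
  forall e : R, (0 < e)%R -> exists E, alg E /\ var (sd A E) < e%:E.

Lemma alg_setC E : alg E -> alg (~` E).
Proof.
move=> [mE [c [Ac sc]]]; split; first exact: measurableC.
exists c; split=> // C /sc [h|h]; [right|left]; by rewrite ?setCK.
Qed.

Lemma sat_refine c1 c E : sat c1 E -> refines c1 c -> sat c E.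
Proof.
move=> s1 r C cC; have [C1 [c1C1 CC1]] := r C cC.
by case: (s1 C1 c1C1) => h; [left|right]; exact: subset_trans h.
Qed.

Lemma alg_setI E F : alg E -> alg F -> alg (E `&` F).
Proof.
move=> [mE [c1 [A1 s1]]] [mF [c2 [A2 s2]]]; split; first exact: measurableI.
have [c [Ac r1 r2]] := AAdir.2 _ _ A1 A2.
exists c; split=> // C cC.
case: (sat_refine s1 r1 cC) => h1; last first.
  by right=> x Cx [Ex _]; exact: h1 x Cx Ex.
case: (sat_refine s2 r2 cC) => h2; last first.
  by right=> x Cx [_ Fx]; exact: h2 x Cx Fx.
by left=> x Cx; split; [exact: h1|exact: h2].
Qed.

Lemma alg_setT : alg setT.
Proof.
split=> //; have [[c Ac] _] := AAdir.
by exists c; split=> // C _; left.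
Qed.

Lemma alg_block a A : AA a -> a A -> alg A.
Proof.
move=> Aa aA; have [_ ma da _] := AApart Aa.
split; first exact: (ma A aA).1.
exists a; split=> // C aC.
have [->|CA] := pselect (C = A); first by left.
right=> x Cx Ax.
have : (C `&` A) x by [].
by rewrite (da C A aC aA CA).
Qed.

Lemma sd_meas A E : measurable A -> measurable E -> measurable (sd A E).
Proof. by move=> mA mE; apply: measurableU; exact: measurableD. Qed.

Lemma approx_alg E : alg E -> approx E.
Proof.
move=> aE; split; first exact: aE.1.
move=> e e0; exists E; split=> //.
have -> : sd E E = set0 by rewrite /sd setDv setU0.
by rewrite measure0 lte_fin.
Qed.

Lemma var_le A B : measurable A -> measurable B -> A `<=` B -> var A <= var B.
Proof. by move=> mA mB AB; apply: le_measure => //; rewrite inE. Qed.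

Lemma approx_SD A B : approx A -> approx B -> approx (A `\` B).
Proof.
move=> [mA hA] [mB hB]; split; first exact: measurableD.
move=> e e0.
have e20 : (0 < e / 2)%R by rewrite divr_gt0.
have [EA [aEA vA]] := hA _ e20; have [EB [aEB vB]] := hB _ e20.
exists (EA `&` ~` EB); split; first by apply: alg_setI => //; exact: alg_setC.
have mEA := aEA.1; have mEB := aEB.1.
have mE : measurable (EA `&` ~` EB) by apply: measurableI => //; exact: measurableC.
apply: (le_lt_trans (y := var (sd A EA `|` sd B EB))).
  apply: var_le; [exact: sd_meas (measurableD _ _) mE|
                  apply: measurableU; exact: sd_meas|].
  move=> x [[[Ax nBx] nE]|[[EAx nEBx] nAB]].
    have [EAx|nEAx] := pselect (EA x).
      have EBx : EB x by apply: contrapT => nEBx; apply: nE.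
      by right; right.
    by left; left.
  have [Ax|nAx] := pselect (A x).
    have Bx : B x by apply: contrapT => nBx; apply: nAB.
    by right; left.
  by left; right.
apply: (le_lt_trans (measureU2 _ _ _)); [exact: sd_meas|exact: sd_meas|].
by rewrite [e]splitr EFinD lteD.
Qed.

Lemma approx_nd (F : (set T)^nat) : nondecreasing_seq F ->
  (forall i, approx (F i)) -> approx (\bigcup_i F i).
Proof.
move=> ndF hF.
have mF i : measurable (F i) := (hF i).1.
have mU : measurable (\bigcup_i F i) by exact: bigcupT_measurable.
split=> // e e0.
have e20 : (0 < e / 2)%R by rewrite divr_gt0.
pose G n := \bigcup_i F i `\` F n.
have mG n : measurable (G n) by exact: measurableD.
have cvG : var \o G @ \oo --> var (\bigcap_n G n).
  apply: nonincreasing_cvg_mu => //.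
  - by rewrite ltey_eq fin_num_measure...
  - exact: bigcapT_measurable.
  - move=> m n mn; apply/subsetPset => x [Ux nFnx]; split=> // Fmx.
    by apply: nFnx; move/subsetPset : (ndF _ _ mn); apply.
have G0 : \bigcap_n G n = set0.
  apply/seteqP; split=> // x Gx.
  have [[k _ Fkx] _] := Gx 0%N I.
  by have [_] := Gx k I.
rewrite G0 measure0 in cvG.
have nb : nbhs (0 : \bar R) [set y | y < (e / 2)%:E].
  by apply: open_nbhs_nbhs; split; [exact: open_ereal_lt_ereal|rewrite /= lte_fin].
have := cvG _ nb.
move=> [M _ HM].
have HGN : var (G M) < (e / 2)%:E by apply: (HM M) => /=.
have [E [aE vE]] := (hF M).2 _ e20.
exists E; split=> //.
have mE := aE.1.
apply: (le_lt_trans (y := var (G M `|` sd (F M) E))).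
  apply: var_le; [exact: sd_meas|apply: measurableU => //; exact: sd_meas|].
  move=> x [[Ux nEx]|[Ex nUx]].
    have [FNx|nFNx] := pselect (F M x).
      by right; left.
    by left.
  right; right; split=> // FNx; apply: nUx; by exists M.
apply: (le_lt_trans (measureU2 _ _ _)); [exact: mG|exact: sd_meas|].
by rewrite [e]splitr EFinD lteD.
Qed.

Lemma approx_all : resolves AA -> forall A, measurable A -> approx A.
Proof.
move=> res A mA.
have lam : lambda_system setT approx.
  split.
  - by [].
  - exact/approx_alg/alg_setT.
  - by move=> B C _; exact: approx_SD.
  - by move=> F ndF hF; exact: approx_nd.
have sI : setI_closed alg by move=> ? ?; exact: alg_setI.
have sub := @lambda_system_subset _ alg sI setT approx lam approx_alg
  (fun X _ => @subsetT _ X).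
apply: sub; move: mA; rewrite -res; apply: sub_sigma_algebra2.
move=> B [a Aa aB]; exact: alg_block Aa aB.
Qed.

Lemma jnE A : measurable A -> jn A = - mu (A `&` N).
Proof. by move=> mA; rewrite jordan_negE cjordan_negE /crestr0 mem_set. Qed.

Lemma jpE A : measurable A -> jp A = mu (A `&` P).
Proof. by move=> mA; rewrite jordan_posE cjordan_posE /crestr0 mem_set. Qed.

Lemma muE A : measurable A -> mu A = jp A - jn A.
Proof. by move=> mA; rewrite (jordan_decomp muPN mA) /cadd /= cscaleN1. Qed.

Lemma step5 E : measurable E -> jn E + jp (~` E) <= var (sd P E).
Proof.
move=> mE.
have [[mP _] [mN _] PN PN0] := muPN.
have mCE : measurable (~` E) by exact: measurableC.
rewrite /sd measureU; [|exact: measurableD|exact: measurableD|]; last first.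
  by apply/seteqP; split=> // x [[Px nEx] [Ex _]].
rewrite addeC; apply: leeD.
  rewrite jpE //; apply: (le_trans (lee_abs _)).
  apply: (le_trans (abse_charge_variation muPN (measurableI _ _ mCE mP))).
  apply: var_le; [exact: measurableI|exact: measurableD|].
  by move=> x [nEx Px].
rewrite jnE //; apply: (le_trans (y := `|mu (E `&` N)|)).
  by rewrite -abseN lee_abs.
apply: (le_trans (abse_charge_variation muPN (measurableI _ _ mE mN))).
apply: var_le; [exact: measurableI|exact: measurableD|].
move=> x [Ex Nx]; split=> // Px.
by have : (P `&` N) x by []; rewrite PN0.
Qed.

Lemma fin_jp A : measurable A -> exists p : R, jp A = p%:E.
Proof. by move=> mA; exists (fine (jp A)); rewrite fineK // fin_num_measure. Qed.

Lemma fin_jn A : measurable A -> exists p : R, jn A = p%:E.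
Proof. by move=> mA; exists (fine (jn A)); rewrite fineK // fin_num_measure. Qed.

Lemma block_ineq C E : measurable C -> measurable E ->
  C `<=` E \/ C `<=` ~` E ->
  var C <= `|mu C| + ((jn (C `&` E) + jp (C `&` ~` E)) +
                      (jn (C `&` E) + jp (C `&` ~` E))).
Proof.
move=> mC mE hC.
rewrite muE //.
have [p hp] := fin_jp mC; have [q hq] := fin_jn mC.
have -> : var C = jp C + jn C by [].
case: hC => h.
  rewrite setIidl // (_ : C `&` ~` E = set0); last exact: (proj1 (subsets_disjoint _ _) h).
  rewrite measure0 adde0 hp hq -EFinB abse_EFin -!EFinD lee_fin.
  have := ler_norm (p - q); lra.
rewrite (setIidl h) (_ : C `&` E = set0); last first.
  exact: (proj2 (disjoints_subset _ _) h).
rewrite measure0 add0e hp hq -EFinB abse_EFin -!EFinD lee_fin.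
have := ler_norm (q - p); rewrite distrC; lra.
Qed.

Lemma key c E : AA c -> sat c E -> measurable E ->
  var setT <= hist_norm1 mu c + (var (sd P E) + var (sd P E)).
Proof.
move=> Ac sc mE; have pc := AApart Ac; have [fc mc dc cc] := pc.
have hsv : measure_function.semi_additive var := @measure_semi_additive _ _ _ _.
have hsp : measure_function.semi_additive jp := @measure_semi_additive _ _ _ _.
have hsn : measure_function.semi_additive jn := @measure_semi_additive _ _ _ _.
rewrite (part_sum hsv pc measurableT).
pose g C := jn (C `&` E) + jp (C `&` ~` E).
apply: (le_trans (y := \sum_(C \in c) (`|mu C| + (g C + g C)))).
  apply: lee_fsum => // C cC; rewrite setIT.
  exact: block_ineq (mc C cC).1 mE (sc C cC).
rewrite fsbig_split // fsbig_split //.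
have -> : \sum_(C \in c) g C = jn E + jp (~` E).
  by rewrite fsbig_split // -(part_sum hsn pc mE) -(part_sum hsp pc (measurableC mE)).
by apply: leeD => //; apply: leeD; exact: step5.
Qed.

Lemma part2 : resolves AA -> var setT = ereal_sup [set hist_norm1 mu a | a in AA].
Proof.
move=> res; apply/eqP; rewrite eq_le; apply/andP; split.
  apply/lee_addgt0Pr => e e0.
  have [[mP _] _ _ _] := muPN.
  have e20 : (0 < e / 2)%R by rewrite divr_gt0.
  have [E [[mE [c [Ac sc]]] vE]] := (approx_all res mP).2 _ e20.
  apply: (le_trans (key Ac sc mE)).
  apply: leeD; first by apply: ereal_sup_ubound; exists c.
  by rewrite [e]splitr EFinD; apply: leeD; exact: ltW.
apply/ereal_supP => y [a Aa <-].
have hsv : measure_function.semi_additive var := @measure_semi_additive _ _ _ _.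
have [fa ma _ _] := AApart Aa.
rewrite /hist_norm1 (part_sum hsv (AApart Aa) measurableT).
apply: lee_fsum => // A aA; rewrite setIT.
exact: abse_charge_variation (ma A aA).1.
Qed.

End part2.

Unset Implicit Arguments.

Theorem mainTheorem2 (R : realType) (X : ptopologicalType)
  (mu : {charge set (borel X) -> \bar R})
  (AA : set (set (set (borel X)))) :
  hausdorff_space X ->
  (forall a, AA a -> fin_partition a) ->
  directed_refinement AA ->
  (forall a b, AA a -> AA b -> refines a b ->
     (hist_norm1 mu a <= hist_norm1 mu b)%E) /\
  (resolves AA ->
   forall (P N : set (borel X)) (muPN : hahn_decomposition mu P N),
     charge_variation muPN setT =
       ereal_sup [set hist_norm1 mu a | a in AA]).
Proof.
move=> _ hpart hdir; split.
  by move=> a b Aa Ab; apply: hist_mono; apply: hpart.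
by move=> res P N muPN; exact: (part2 muPN hpart hdir res).
Qed.
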